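(* Let $G=(V,E)$ be a finite simple graph and let $C\subseteq V$. Let $x\in\{0,1\}^{V}$ and $F=\{v\in V\colon x_v=1\}$. Then $F$ is a fort of $G$ with $F\subseteq V\setminus\mathrm{cl}(C)$ if and only if $x$ satisfies: (a) $\sum_{v\in V}x_v\geq1$; (b) $x_u-x_v+\sum_{w\in N(u)\setminus\{v\}}x_w\geq0$ for all $v\in V$ and all $u\in N(v)$; (c) $x_v=0$ for all $v\in C$.
   Context: $N(u)$ denotes the neighborhood of $u$. A fort of $G$ is a non-empty set $F\subseteq V$ such that no vertex $u\in V\setminus F$ has exactly one neighbor in $F$. The closure $\mathrm{cl}(C)$ of $C$ is the set of filled vertices obtained by starting with the vertices of $C$ filled and repeatedly applying the standard color change rule (a filled vertex $u$ forces a non-filled vertex $v$ to become filled if $v$ is the only non-filled neighbor of $u$) until no more forces are possible. *)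

(* Defs.v *)
(* A finite simple graph is a symmetric irreflexive
   relation e on a finType T (vertex set V = T). *)
From mathcomp Require Import all_boot all_order all_algebra.
Set Implicit Arguments. Unset Strict Implicit. Unset Printing Implicit Defensive.

Section Graph.
Variables (T : finType) (e : rel T).

Definition nbhd (u : T) : {set T} := [set w | e u w].

Definition fort (F : {set T}) : Prop :=
  F != set0 /\ forall u, u \notin F -> #|nbhd u :&: F| != 1%N.

Definition force_step (S : {set T}) : {set T} :=
  S :|: [set v | [exists u, (u \in S) && (nbhd u :\: S == [set v])]].

(* closure: iterate until no more forces possible; since each nontrivial
   round adds a vertex, #|T| rounds suffice to reach the fixpoint *)
Definition cl (C : {set T}) : {set T} := iter #|T| force_step C.

End Graph.

(* Main.v *)
Require Import Defs.
From mathcomp Require Import all_boot all_order all_algebra.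
From mathcomp Require Import zify.
Import Order.TTheory GRing.Theory Num.Theory.
Local Open Scope ring_scope.

Lemma sum_card {T : finType} {F : {set T}} (A : {set T}) {x : T -> int}
  (xE : forall w, x w = (w \in F)%:R) :
  \sum_(w in A) x w = (#|A :&: F|)%:R.
Proof.
transitivity (\sum_(w in A) (if w \in F then 1 else 0 : int)).
  by apply: eq_bigr => w _; rewrite xE; case: (w \in F).
rewrite -big_mkcondr /=.
rewrite (eq_bigl (fun w => w \in A :&: F)); last by move=> w; rewrite inE.
by rewrite sumr_const.
Qed.

Lemma cl_sub (T : finType) (e : rel T) (C : {set T}) : C \subset cl e C.
Proof.
rewrite /cl; elim: #|T| => [|n IH] //=.
exact: subset_trans IH (subsetUl _ _).
Qed.

Lemma cl_disj (T : finType) (e : rel T) (C F : {set T}) :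
  (forall u, u \notin F -> #|nbhd e u :&: F| != 1%N) ->
  [disjoint C & F] -> [disjoint cl e C & F].
Proof.
move=> hF; rewrite /cl; elim: #|T| => [|n IH] //= hC.
have {IH hC} := IH hC; set S := iter _ _ _ => hS.
rewrite /force_step; apply/pred0P => v /=.
apply/negP => /andP []; rewrite in_setU => /orP [vS|].
  by rewrite (disjointFr hS vS).
rewrite inE => /existsP [u /andP [uS /eqP hu]] vF.
have uF : u \notin F by rewrite (disjointFr hS uS).
have := hF u uF; apply/negP; rewrite negbK; apply/eqP.
have -> : nbhd e u :&: F = [set v]; last by rewrite cards1.
apply/setP => w; rewrite !inE; apply/andP/eqP => [[wn wF]|->].
  have : w \in nbhd e u :\: S by rewrite !inE wn (disjointFl hS wF).
  by rewrite hu inE => /eqP.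
split=> //; have : v \in [set v] by rewrite inE.
by rewrite -hu !inE => /andP [_ ->].
Qed.

Theorem theorem5p3 (T : finType) (e : rel T)
    (e_sym : symmetric e) (e_irr : irreflexive e)
    (C : {set T}) (x : T -> int) (x01 : forall v, x v = 0 \/ x v = 1) :
  (fort e [set v | x v == 1] /\ [set v | x v == 1] \subset ~: cl e C) <->
  [/\ 1 <= \sum_(v : T) x v,
      (forall v u, u \in nbhd e v ->
         0 <= x u - x v + \sum_(w in nbhd e u :\ v) x w)
    & (forall v, v \in C -> x v = 0)].
Proof.
set F := [set v | x v == 1].
have xE w : x w = (w \in F)%:R.
  by rewrite inE; case: (x01 w) => ->.
have sumT : \sum_(v : T) x v = (#|F|)%:R.
  by rewrite -(setTI F) -(sum_card _ xE); apply: eq_bigl => v; rewrite inE.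
have symN a b : (a \in nbhd e b) = (b \in nbhd e a).
  by rewrite !inE e_sym.
rewrite sumT ler1n card_gt0 -disjoints_subset.
split.
- move=> [[F0 hF] hd]; split => //.
  + move=> v u; rewrite (sum_card _ xE) !xE.
    case vF: (v \in F); case uF: (u \in F) => /= uv; try lia.
    suff : (0 < #|(nbhd e u :\ v) :&: F|)%N by lia.
    rewrite card_gt0.
    have := hF u (negbT uF); apply: contraR => /negPn /eqP h.
    have -> : nbhd e u :&: F = [set v].
      apply/setP => w; rewrite in_setI in_set1; apply/idP/eqP => [/andP [wn wF]|->].
        apply/eqP; apply/negPn/negP => wv.
        have : w \in (set0 : {set T}) by rewrite -h in_setI in_setD1 wv wn wF.
        by rewrite in_set0.
      by rewrite symN uv vF.
    by rewrite cards1.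
  + move=> v vC; apply/eqP; rewrite xE pnatr_eq0 eqb0.
    by rewrite (disjointFl hd (subsetP (cl_sub _ e C) v vC)).
- move=> [F0 hb hC].
  have fortF : forall u, u \notin F -> #|nbhd e u :&: F| != 1%N.
    move=> u uF; apply/negP => /cards1P [v hv].
    have : v \in nbhd e u :&: F by rewrite hv set11.
    rewrite in_setI => /andP [vn vF].
    have := hb v u; rewrite symN => /(_ vn).
    rewrite (sum_card _ xE) !xE vF (negbTE uF).
    have -> : (nbhd e u :\ v) :&: F = set0.
      apply/setP => w; rewrite in_set0 in_setI in_setD1.
      apply/negbTE/negP => /andP [/andP [wv wn] wF].
      have : w \in [set v] by rewrite -hv in_setI wn wF.
      by rewrite in_set1 (negbTE wv).
    by rewrite cards0 /=; lia.
  split; first by split.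
  rewrite disjoint_sym; apply: cl_disj => //.
  apply/pred0P => v /=; apply/negP => /andP [vC vF].
  by move: vF; rewrite inE hC.
Qed.
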